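(* Let $\Lambda$ be a finite-dimensional algebra over a field of characteristic $p>0$, and let ${\bf T}(\Lambda)=\Lambda\ltimes\Lambda^*$ be its trivial extension. (1) $T_0({\bf T}(\Lambda))^\perp=Z({\bf T}(\Lambda))=Z(\Lambda)\ltimes \operatorname{Ann}_{\Lambda^*}(K(\Lambda))$. (2) For all $n\ge 1$, $T_n({\bf T}(\Lambda))^{\perp} = 0 \ltimes \operatorname{Ann}_{\Lambda^*}(T_n(\Lambda))$. (3) For all $n\ge 1$, $T_n(Z({\bf T}(\Lambda)))^\perp/K({\bf T}(\Lambda))= 0\ltimes \left(\operatorname{Ann}_{\Lambda^*}(T_n(Z(\Lambda)))/[\Lambda,\Lambda^*]\right)$. (4) For all $n\ge 1$, $P_n(Z({\bf T}(\Lambda)))^\perp/K({\bf T}(\Lambda))= \Lambda/K(\Lambda)\ltimes \left(\operatorname{Ann}_{\Lambda^*}(P_n(Z(\Lambda)))/[\Lambda,\Lambda^*]\right)$.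
   Context: For a finite-dimensional algebra $A$ over a field $k$ of characteristic $p>0$: $K(A)$ is the $k$-subspace spanned by all commutators $ab-ba$, $Z(A)$ is the center, and $T_n(A)=\{x\in A\mid x^{p^n}\in K(A)\}$ for $n\ge 0$ (so $T_0(A)=K(A)$). For $\Lambda$ finite-dimensional, $\Lambda^*=\operatorname{Hom}_k(\Lambda,k)$ is a $\Lambda$-$\Lambda$-bimodule via $(a\varphi)(b)=\varphi(ba)$, $(\varphi a)(b)=\varphi(ab)$; the trivial extension ${\bf T}(\Lambda)=\Lambda\ltimes\Lambda^*$ has multiplication $(a,\varphi)(b,\psi)=(ab,a\psi+\varphi b)$ and is a symmetric algebra with symmetrizing form $\langle (a,\varphi),(b,\psi)\rangle=\psi(a)+\varphi(b)$ (coming from $\pi(a,\varphi)=\varphi(1)$). For a subspace $M$ of ${\bf T}(\Lambda)$, $M^\perp$ denotes its orthogonal space with respect to this form. For a subspace $V\le\Lambda$, $\operatorname{Ann}_{\Lambda^*}(V)=\{\varphi\in\Lambda^*\mid \varphi(V)=0\}$. $[\Lambda,\Lambda^*]$ is the subspace of $\Lambda^*$ spanned by all $a\varphi-\varphi a$ with $a\in\Lambda$, $\varphi\in\Lambda^*$. For a commutative algebra $Z$, $P_n(Z)$ is the subspace spanned by all $z^{p^n}$, $z\in Z$, and $T_n(Z)=\{z\in Z\mid z^{p^n}=0\}$. In (3) and (4), $T_n(Z({\bf T}(\Lambda)))^\perp$ and $P_n(Z({\bf T}(\Lambda)))^\perp$ are orthogonal spaces in ${\bf T}(\Lambda)$ (they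 contain $K({\bf T}(\Lambda))$), and $K({\bf T}(\Lambda))=K(\Lambda)\ltimes[\Lambda,\Lambda^*]$. *)

(* Defs.v *)
From HB Require Import structures.
From mathcomp Require Import all_boot all_order all_algebra all_field.
Set Implicit Arguments. Unset Strict Implicit. Unset Printing Implicit Defensive.
Import GRing.Theory.
Local Open Scope ring_scope.

Section Defs.
Variable F : fieldType.

Definition span_of (V : lmodType F) (P : V -> Prop) (x : V) : Prop :=
  exists s : seq (F * V), (forall c, c \in s -> P c.2) /\
                          x = \sum_(c <- s) c.1 *: c.2.

(* "M/K = N/K": images of M and N in the quotient V/K coincide *)
Definition quot_eq (V : lmodType F) (K M N : V -> Prop) : Prop :=
  forall x, (exists2 m, M m & K (x - m)) <-> (exists2 m, N m & K (x - m)).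

Variable L : falgType F.

Definition Kcomm (x : L) : Prop := span_of (fun y => exists a b : L, y = a * b - b * a) x.
Definition Zc (x : L) : Prop := forall y : L, x * y = y * x.
Definition Tn (p n : nat) (x : L) : Prop := Kcomm (x ^+ (p ^ n)).
Definition TnZ (p n : nat) (z : L) : Prop := Zc z /\ z ^+ (p ^ n) = 0.
Definition PnZ (p n : nat) (x : L) : Prop :=
  span_of (fun y => exists2 z, Zc z & y = z ^+ (p ^ n)) x.

Definition dual := 'Hom(L, F^o).
Definition lact (a : L) (phi : dual) : dual := linfun (fun b : L => phi (b * a) : F^o).
Definition ract (phi : dual) (a : L) : dual := linfun (fun b : L => phi (a * b) : F^o).

Definition Ann (P : L -> Prop) (phi : dual) : Prop := forall v, P v -> phi v = 0.
Definition commLD (phi : dual) : Prop :=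
  span_of (fun y => exists (a : L) (psi : dual), y = lact a psi - ract psi a) phi.

Definition TE := (L * dual)%type.
Definition tmul (x y : TE) : TE := (x.1 * y.1, lact x.1 y.2 + ract x.2 y.1).
Definition tone : TE := (1, 0).
Definition tpow (x : TE) (m : nat) : TE := iter m (tmul x) tone.
Definition tform (x y : TE) : F := (y.2 x.1 : F) + (x.2 y.1 : F).
Definition perp (M : TE -> Prop) (y : TE) : Prop := forall x, M x -> tform x y = 0.

Definition KT (x : TE) : Prop := span_of (fun y => exists a b : TE, y = tmul a b - tmul b a) x.
Definition ZT (x : TE) : Prop := forall y : TE, tmul x y = tmul y x.
Definition TnT (p n : nat) (x : TE) : Prop := KT (tpow x (p ^ n)).
Definition TnZT (p n : nat) (z : TE) : Prop := ZT z /\ tpow z (p ^ n) = 0.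
Definition PnZT (p n : nat) (x : TE) : Prop :=
  span_of (fun y => exists2 z, ZT z & y = tpow z (p ^ n)) x.
End Defs.

(* Main.v *)
Require Import Defs.
From HB Require Import structures.
From mathcomp Require Import all_boot all_order all_algebra all_field.
From mathcomp Require Import zify ring.
From Stdlib Require Import Classical.
Set Implicit Arguments. Unset Strict Implicit. Unset Printing Implicit Defensive.
Import GRing.Theory.
Local Open Scope ring_scope.

Section S.
Variable F : fieldType.

Section Span.
Variable V : lmodType F.
Implicit Types P Q : V -> Prop.

Lemma span_ind P Q : Q 0 -> (forall x y, Q x -> Q y -> Q (x + y)) ->
  (forall k x, Q x -> Q (k *: x)) -> (forall x, P x -> Q x) ->
  forall x, span_of P x -> Q x.
Proof.
move=> Q0 QD QZ PQ x [s [Ps ->]].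
elim: s Ps => [|c s IH] Ps; first by rewrite big_nil.
rewrite big_cons; apply: QD; first by apply/QZ/PQ/Ps; rewrite mem_head.
by apply: IH => d ds; apply: Ps; rewrite in_cons ds orbT.
Qed.

Lemma span0 P : span_of P 0.
Proof. by exists [::]; rewrite big_nil. Qed.

Lemma spanD P x y : span_of P x -> span_of P y -> span_of P (x + y).
Proof.
move=> [s [Ps ->]] [t [Pt ->]]; exists (s ++ t); rewrite big_cat; split=> //.
by move=> c; rewrite mem_cat => /orP [/Ps|/Pt].
Qed.

Lemma spanZ P k x : span_of P x -> span_of P (k *: x).
Proof.
move=> [s [Ps ->]]; exists [seq (k * c.1, c.2) | c <- s]; split.
  by move=> c /mapP [d /Ps ? ->].
by rewrite big_map scaler_sumr; apply: eq_bigr => c _; rewrite scalerA.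
Qed.

Lemma span_gen P x : P x -> span_of P x.
Proof.
by move=> Px; exists [:: (1, x)]; rewrite big_seq1 scale1r; split=> // c; rewrite inE => /eqP ->.
Qed.

Lemma spanN P x : span_of P x -> span_of P (- x).
Proof. by move=> /(spanZ (-1)); rewrite scaleN1r. Qed.

Lemma spanB P x y : span_of P x -> span_of P y -> span_of P (x - y).
Proof. by move=> ? ?; apply: spanD => //; apply: spanN. Qed.

Lemma span_sum P I (r : seq I) (G : I -> V) :
  (forall i, span_of P (G i)) -> span_of P (\sum_(i <- r) G i).
Proof.
move=> H; elim/big_ind: _ => //; [exact: span0 | exact: spanD].
Qed.

Lemma span_span P x : span_of (span_of P) x -> span_of P x.
Proof. apply: span_ind => //; [exact: span0|exact: spanD|exact: spanZ]. Qed.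
End Span.

Variable L : falgType F.

Lemma lin_linfun (U W : vectType F) (f : U -> W) (lf : linear f) x : linfun f x = f x.
Proof.
pose flM := GRing.isLinear.Build _ _ _ _ f lf.
pose fL : {linear _ -> _} := HB.pack f flM.
exact: (lfunE fL x).
Qed.

Lemma lactE (a : L) (phi : dual L) b : lact a phi b = phi (b * a).
Proof.
rewrite /lact lin_linfun // => k u v /=.
by rewrite mulrDl -scalerAl linearP.
Qed.

Lemma ractE (a : L) (phi : dual L) b : ract phi a b = phi (a * b).
Proof.
rewrite /ract lin_linfun // => k u v /=.
by rewrite mulrDr -scalerAr linearP.
Qed.

Lemma vspace_of (S : L -> Prop) : S 0 -> (forall x y, S x -> S y -> S (x + y)) ->
  (forall k x, S x -> S (k *: x)) -> exists U : {vspace L}, forall x, S x <-> x \in U.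
Proof.
move=> S0 SD SZ.
have main : forall k (s : seq L), (forall x, x \in s -> S x) ->
    (\dim {:L} - \dim <<s>> <= k)%N -> exists U : {vspace L}, forall x, S x <-> x \in U.
  elim=> [|k IH] s Hs Hd;
  (case: (classic (forall x, S x -> x \in <<s>>%VS)) => H;
   [exists <<s>>%VS => x; split; [exact: H|] ; move=> xs;
    rewrite (coord_span (X := in_tuple s) xs); elim/big_ind: _ => //;
    move=> i _; apply: SZ; apply: Hs; apply: mem_nth; exact: ltn_ord |]);
  (have [x [Sx nx]] : exists x, S x /\ x \notin <<s>>%VS by
    apply: NNPP => H'; apply: H => x Sx; apply: NNPP => nx; apply: H'; exists x; split => //; apply/negP);
  (have lt : (\dim <<s>> < \dim <<x :: s>>)%N by
    rewrite (ltn_leqif (dimv_leqif_sup _)) ?span_cons ?addvSr //;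
    apply/negP => /subvP sub; move/negP: nx; apply; apply: sub; rewrite -span_cons;
    apply: memv_span; rewrite mem_head);
  have le : (\dim <<x :: s>> <= \dim {:L})%N by apply: dimvS; apply: subvf.
    lia.
  apply: (IH (x :: s)); last by lia.
  by move=> y; rewrite in_cons => /orP [/eqP -> | /Hs].
by apply: (main _ [::]) => //.
Qed.

Lemma separate (S : L -> Prop) : S 0 -> (forall x y, S x -> S y -> S (x + y)) ->
  (forall k x, S x -> S (k *: x)) -> forall c,
  (forall phi : dual L, Ann S phi -> phi c = 0) -> S c.
Proof.
move=> S0 SD SZ c H; have [U HU] := vspace_of S0 SD SZ.
apply/HU; apply: NNPP => ncU.
set w := c - projv U c.
have nw : w != 0.
  apply/negP => /eqP w0; apply: ncU; have -> : c = projv U c.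
    by apply/eqP; rewrite -subr_eq0 -/w w0.
  exact: memv_proj.
have [i ni] : exists i, coord (vbasis {:L}) i w != 0.
  apply: NNPP => H'; move/negP: nw; apply; apply/eqP.
  rewrite (coord_vbasis (memvf w)); apply: big1 => i _.
  have -> : coord (vbasis {:L}) i w = 0 by apply: NNPP => ne; apply: H'; exists i; apply/eqP.
  by rewrite scale0r.
pose phi : dual L := linfun (fun x : L => (coord (vbasis {:L}) i (x - projv U x) : F^o)).
have phiE : forall x, phi x = coord (vbasis {:L}) i (x - projv U x).
  move=> x; rewrite /phi lin_linfun // => k u v /=.
  have -> : k *: u + v - projv U (k *: u + v) = k *: (u - projv U u) + (v - projv U v).
    by rewrite linearP /= scalerBr opprD addrACA.
  by rewrite linearP.
move/negP: ni; apply; apply/eqP; rewrite -phiE; apply: H => v /HU vU.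
by rewrite phiE projv_id // subrr linear0.
Qed.
Lemma pairD (x y : TE L) : x + y = (x.1 + y.1, x.2 + y.2).
Proof. by []. Qed.
Lemma pairZ k (x : TE L) : k *: x = (k *: x.1, k *: x.2).
Proof. by []. Qed.
Lemma pair0 : (0 : TE L) = (0, 0).
Proof. by []. Qed.
Lemma pairN (x : TE L) : - x = (- x.1, - x.2).
Proof. by []. Qed.
Lemma pairB (x y : TE L) : x - y = (x.1 - y.1, x.2 - y.2).
Proof. by []. Qed.

Implicit Types (a b c : L) (phi psi : dual L).

Lemma lactD a phi psi : lact a (phi + psi) = lact a phi + lact a psi.
Proof. by apply/lfunP => b; rewrite add_lfunE !lactE add_lfunE. Qed.
Lemma lact0 a : lact a 0 = 0 :> dual L.
Proof. by apply/lfunP => b; rewrite lactE !zero_lfunE. Qed.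
Lemma lact_sum a I (r : seq I) (G : I -> dual L) :
  lact a (\sum_(i <- r) G i) = \sum_(i <- r) lact a (G i).
Proof. exact: (big_morph (lact a) (lactD a) (lact0 a)). Qed.
Lemma lactM a b phi : lact (a * b) phi = lact a (lact b phi).
Proof. by apply/lfunP => c; rewrite !lactE mulrA. Qed.
Lemma lact1 phi : lact 1 phi = phi.
Proof. by apply/lfunP => c; rewrite !lactE mulr1. Qed.
Lemma lact0l phi : lact 0 phi = 0.
Proof. by apply/lfunP => c; rewrite !lactE zero_lfunE mulr0 linear0. Qed.
Lemma ractM a b phi : ract (ract phi a) b = ract phi (a * b).
Proof. by apply/lfunP => c; rewrite !ractE mulrA. Qed.
Lemma ract1 phi : ract phi 1 = phi.
Proof. by apply/lfunP => c; rewrite !ractE mul1r. Qed.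
Lemma ract0l a : ract 0 a = 0 :> dual L.
Proof. by apply/lfunP => c; rewrite !ractE !zero_lfunE. Qed.
Lemma ract0r phi : ract phi 0 = 0.
Proof. by apply/lfunP => c; rewrite !ractE zero_lfunE mul0r linear0. Qed.

Lemma tpow_S (x : TE L) m : tpow x m.+1 = tmul x (tpow x m).
Proof. by []. Qed.

Lemma tpow1 (x : TE L) m : (tpow x m).1 = x.1 ^+ m.
Proof. by elim: m => [|m IH] //; rewrite tpow_S /= IH exprS. Qed.

Lemma tpow2 (x : TE L) m : (tpow x m).2 =
  \sum_(i < m) lact (x.1 ^+ i) (ract x.2 (x.1 ^+ (m - i.+1))).
Proof.
elim: m => [|m IH]; first by rewrite big_ord0.
rewrite tpow_S /= IH tpow1 big_ord_recl /= expr0 lact1 subn1 /= addrC.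
congr (_ + _); rewrite lact_sum; apply: eq_bigr => i _.
rewrite exprS lactM subSS. done.
Qed.

Variable p : nat.
Hypothesis charFp : p \in [pchar F].

Lemma natr_dvd m (v : dual L) : (p %| m)%N -> v *+ m = 0.
Proof.
move=> pm; rewrite -scaler_nat.
have -> : (m%:R : F) = 0 by apply/eqP; rewrite -(dvdn_pcharf charFp).
by rewrite scale0r.
Qed.

Lemma commLD_tpow (x : TE L) m : (p %| m)%N -> commLD (tpow x m).2.
Proof.
move=> pm; rewrite tpow2.
have E : forall i : 'I_m, lact (x.1 ^+ i) (ract x.2 (x.1 ^+ (m - i.+1))) =
   (lact (x.1 ^+ i) (ract x.2 (x.1 ^+ (m - i.+1))) - ract (ract x.2 (x.1 ^+ (m - i.+1))) (x.1 ^+ i))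
   + ract x.2 (x.1 ^+ m.-1).
  move=> i; rewrite ractM -exprD.
  have -> : (m - i.+1 + i = m.-1)%N by have := ltn_ord i; lia.
  by rewrite subrK.
rewrite (eq_bigr _ (fun i _ => E i)) big_split /= sumr_const card_ord natr_dvd // addr0.
apply: span_sum => i; apply: span_gen; do 2 eexists; reflexivity.
Qed.

Lemma ZcX c m : Zc c -> Zc (c ^+ m).
Proof. by move=> Hc y; apply/esym/commrX/esym/Hc. Qed.

Lemma tpowZc (x : TE L) m : Zc x.1 -> (p %| m)%N -> (tpow x m).2 = 0.
Proof.
move=> Hc pm; rewrite tpow2.
rewrite (eq_bigr (fun _ => ract x.2 (x.1 ^+ m.-1))) ?sumr_const ?card_ord ?natr_dvd //.
move=> i _; apply/lfunP => b; rewrite lactE !ractE -(ZcX i Hc b) mulrA -exprD.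
by have -> : (m - i.+1 + i = m.-1)%N by have := ltn_ord i; lia.
Qed.

Lemma liftK d : Kcomm d -> KT (d, 0 : dual L).
Proof.
move: d; apply: span_ind.
- exact: span0.
- by move=> x y Hx Hy; have := spanD Hx Hy; rewrite pairD /= addr0.
- by move=> k x Hx; have := spanZ k Hx; rewrite pairZ /= scaler0.
move=> _ [a [b ->]]; apply: span_gen; exists (a, 0), (b, 0).
by rewrite pairB /= !lact0 !ract0l !addr0 subrr.
Qed.

Lemma liftC psi : commLD psi -> KT (0 : L, psi).
Proof.
move: psi; apply: span_ind.
- exact: span0.
- by move=> x y Hx Hy; have := spanD Hx Hy; rewrite pairD /= addr0.
- by move=> k x Hx; have := spanZ k Hx; rewrite pairZ /= scaler0.
move=> _ [a [psi ->]]; apply: span_gen; exists (a, 0), (0, psi).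
by rewrite pairB /= mulr0 mul0r subrr lact0l ract0r addr0 add0r.
Qed.

Lemma KT_fst (x : TE L) : KT x -> Kcomm x.1.
Proof.
move: x; apply: span_ind.
- exact: span0.
- by move=> x y; apply: spanD.
- by move=> k x; apply: spanZ.
move=> _ [a [b ->]]; apply: span_gen; by exists a.1, b.1.
Qed.

Lemma TnT_iff n (y : TE L) : (0 < n)%N -> TnT p n y <-> Tn p n y.1.
Proof.
move=> n0; have pn : (p %| p ^ n)%N by rewrite dvdn_exp.
rewrite /TnT /Tn; split; first by move/KT_fst; rewrite tpow1.
move=> H; have -> : tpow y (p ^ n) = ((tpow y (p ^ n)).1, 0) + (0, (tpow y (p ^ n)).2).
  by rewrite pairD /= addr0 add0r; case: (tpow _ _).
apply: spanD; first by apply: liftK; rewrite tpow1.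
by apply: liftC; apply: commLD_tpow.
Qed.

Lemma Ann_span (P : L -> Prop) phi : Ann P phi -> Ann (span_of P) phi.
Proof.
move=> H; apply: span_ind => //; first by rewrite linear0.
- by move=> x y Hx Hy; rewrite linearD /= Hx Hy addr0.
- by move=> k x Hx; rewrite linearZ /= Hx scaler0.
Qed.

Lemma ZT_iff (x : TE L) : ZT x <-> Zc x.1 /\ Ann (@Kcomm F L) x.2.
Proof.
split.
  move=> H; split.
    by move=> y; have := H (y, 0); rewrite /tmul /= => -[].
  apply: Ann_span => _ [a [b ->]].
  have := H (a, 0); rewrite /tmul /= => -[_] /lfunP /(_ b).
  rewrite !add_lfunE lact0 ract0l zero_lfunE add0r addr0 ractE lactE => E.
  by rewrite linearB /= E subrr.
case=> Hc HK y; rewrite /tmul; congr (_, _); first exact: Hc.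
rewrite addrC; congr (_ + _); apply/lfunP => b; rewrite lactE ractE.
  apply/eqP; rewrite -subr_eq0 -linearB /=; apply/eqP; apply: HK.
  by apply: span_gen; exists y.1, b.
by rewrite Hc.
Qed.

Lemma sep0 c : (forall phi : dual L, phi c = 0) -> c = 0.
Proof.
move=> H; apply: (@separate (fun v => v = 0)) => //.
- by move=> x y -> ->; rewrite addr0.
- by move=> k x ->; rewrite scaler0.
Qed.

Lemma sepK c : (forall phi : dual L, Ann (@Kcomm F L) phi -> phi c = 0) -> Kcomm c.
Proof.
apply: separate; [exact: span0 | exact: spanD | exact: spanZ].
Qed.

Lemma tform_comm (a b x : TE L) : tform (tmul a b - tmul b a) x =
  x.2 (a.1 * b.1 - b.1 * a.1) + a.2 (b.1 * x.1 - x.1 * b.1) + b.2 (x.1 * a.1 - a.1 * x.1).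
Proof.
rewrite /tform /tmul /= !add_lfunE opp_lfunE add_lfunE !lactE !ractE !linearB /=.
ring.
Qed.

Lemma perp_span (P : TE L -> Prop) (x : TE L) :
  (forall t, P t -> tform t x = 0) -> forall t, span_of P t -> tform t x = 0.
Proof.
move=> H; apply: span_ind => //.
- by rewrite /tform /= linear0 zero_lfunE addr0.
- move=> t u Ht Hu; move: Ht Hu; rewrite /tform /= linearD add_lfunE /= => Ht Hu.
  by rewrite addrACA Ht Hu addr0.
- move=> k t; rewrite /tform /= linearZ scale_lfunE /= => Ht.
  by rewrite -(mulr0 k) -Ht mulrDr.
Qed.

Lemma tpow_one (y : TE L) : tpow y 1 = y.
Proof. by rewrite tpow_S /tmul /= mulr1 lact0 ract1 add0r; case: y. Qed.

Lemma part1 (x : TE L) : (perp (TnT p 0) x <-> ZT x) /\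
                    (ZT x <-> Zc x.1 /\ Ann (@Kcomm F L) x.2).
Proof.
split; last exact: ZT_iff.
have TnT0 : forall y : TE L, TnT p 0 y <-> KT y by move=> y; rewrite /TnT expn0 tpow_one.
split.
- move=> H; apply/ZT_iff; split.
  + move=> b; apply/eqP; rewrite -subr_eq0; apply/eqP; apply: sep0 => al.
    have := H (tmul (b, 0) (0, al) - tmul (0, al) (b, 0)).
    rewrite tform_comm /= mul0r mulr0 subrr linear0 zero_lfunE add0r add0r => -> //.
    by apply/TnT0/span_gen; do 2 eexists.
  + apply: Ann_span => _ [a [b ->]].
    have := H (tmul (a, 0) (b, 0) - tmul (b, 0) (a, 0)).
    rewrite tform_comm /= !zero_lfunE !addr0 => -> //.
    by apply/TnT0/span_gen; do 2 eexists.
- move=> /ZT_iff [Hc HK] t /TnT0 Kt; apply: (perp_span _ Kt) => _ [a [b ->]].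
  rewrite tform_comm HK; last by apply: span_gen; do 2 eexists.
  by rewrite !Hc !subrr !linear0 !addr0.
Qed.

Lemma tpowZ (y : TE L) m : Zc y.1 -> (p %| m)%N -> tpow y m = (y.1 ^+ m, 0).
Proof. by move=> H pm; rewrite -tpow1 -(tpowZc H pm); case: (tpow y m). Qed.

Lemma pn_facts n : (1 <= n)%N -> (0 < p ^ n)%N /\ (p %| p ^ n)%N.
Proof.
move=> n0; have pp : prime p := pcharf_prime charFp.
by rewrite expn_gt0 prime_gt0 // dvdn_exp.
Qed.

Lemma part2 n : (1 <= n)%N -> forall x : TE L,
     perp (TnT p n) x <-> x.1 = 0 /\ Ann (Tn p n) x.2.
Proof.
move=> n0 x; have [pn0 pn] := pn_facts n0.
split.
- move=> H; split.
  + apply: sep0 => phi; have := H (0, phi); rewrite /tform /= linear0 add0r; apply.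
    apply/TnT_iff => //=; rewrite /Tn expr0n eqn0Ngt pn0 /=; exact: span0.
  + move=> y Hy; have := H (y, 0); rewrite /tform /= zero_lfunE addr0; apply.
    exact/TnT_iff.
- case=> x1 Hx t /(TnT_iff _ n0) Ht; rewrite /tform x1 linear0 addr0; exact: Hx.
Qed.

Lemma part3 n : (1 <= n)%N ->
     quot_eq (@KT F L) (perp (TnZT p n))
             (fun x => x.1 = 0 /\ Ann (TnZ p n) x.2).
Proof.
move=> n0 x; have [pn0 pn] := pn_facts n0.
split.
- case=> m Hm Hxm; exists (0, m.2); first split => //=.
    move=> c [Zc cp]; have := Hm (c, 0); rewrite /tform /= zero_lfunE addr0; apply.
    split; first by apply/ZT_iff; split => //= v _; rewrite zero_lfunE.
    by rewrite tpowZ //= cp.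
  have -> : x - (0, m.2) = (x - m) + (m.1, 0).
    by rewrite !pairB pairD /= subr0 subrK addr0.
  apply: spanD Hxm (liftK _); apply: sepK => chi Hchi.
  have := Hm (0, chi); rewrite /tform /= linear0 add0r; apply; split.
    by apply/ZT_iff; split => //= y; rewrite mul0r mulr0.
  by rewrite tpowZ /= ?expr0n ?eqn0Ngt ?pn0 //= => y; rewrite mul0r mulr0.
- case=> m [m1 Hm2] Hxm; exists m => // t [Zt tp].
  rewrite /tform m1 linear0 addr0; apply: Hm2; split; first by case/ZT_iff: Zt.
  by rewrite -tpow1 tp.
Qed.

Lemma part4 n : (1 <= n)%N ->
     quot_eq (@KT F L) (perp (PnZT p n))
             (fun x => Ann (PnZ p n) x.2).
Proof.
move=> n0; have [pn0 pn] := pn_facts n0.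
have E : forall x : TE L, perp (PnZT p n) x <-> Ann (PnZ p n) x.2.
  move=> x; split.
  - move=> H y Py; have := H (y, 0); rewrite /tform /= zero_lfunE addr0; apply.
    move: y Py; apply: span_ind.
    + exact: span0.
    + by move=> u v Hu Hv; have := spanD Hu Hv; rewrite pairD /= addr0.
    + by move=> k u Hu; have := spanZ k Hu; rewrite pairZ /= scaler0.
    move=> _ [z Zz ->]; apply: span_gen; exists (z, 0).
      by apply/ZT_iff; split => //= v _; rewrite zero_lfunE.
    by rewrite tpowZ.
  - move=> H t Pt; apply: (perp_span _ Pt) => _ [z Zz ->].
    move/ZT_iff: Zz => [Zz1 _].
    rewrite tpowZ // /tform /= zero_lfunE addr0; apply: H; apply: span_gen.
    by exists z.1.
move=> x; split; case=> m Hm Hxm; exists m => //; exact/E.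
Qed.
End S.

Theorem theorem4p1 (F : fieldType) (L : falgType F) (p : nat)
  (charFp : p \in [pchar F]) :
  (* (1) *)
  (forall x : TE L, (perp (TnT p 0) x <-> ZT x) /\
                    (ZT x <-> Zc x.1 /\ Ann (@Kcomm F L) x.2)) /\
  (* (2) *)
  (forall n : nat, (1 <= n)%N -> forall x : TE L,
     perp (TnT p n) x <-> x.1 = 0 /\ Ann (Tn p n) x.2) /\
  (* (3) *)
  (forall n : nat, (1 <= n)%N ->
     quot_eq (@KT F L) (perp (TnZT p n))
             (fun x => x.1 = 0 /\ Ann (TnZ p n) x.2)) /\
  (* (4) *)
  (forall n : nat, (1 <= n)%N ->
     quot_eq (@KT F L) (perp (PnZT p n))
             (fun x => Ann (PnZ p n) x.2)).
Proof.
split; first by move=> x; apply: part1.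
split; first exact: part2 charFp.
split; first exact: part3 charFp.
exact: part4 charFp.
Qed.
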